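(* Let $\Phi=\bigvee_{j=1}^J\phi_j$ be a pleasant UCQ over $\Sigma$ and let $D$ be a structure over $\Sigma$. Then $\mathtt{cq}(\Phi)\odot\text{Þ}(D)=1+\Phi\odot D$.
   Context: Structures are finite relational structures; constants are interpreted in the vertex set $\mathcal V(D)$. For a CQ $\phi$ and structure $D$, $\phi\odot D$ is the number of maps $h:var(\phi)\to\mathcal V(D)$ sending every atom of $\phi$ (with constants interpreted) to a fact of $D$; for a UCQ $\Phi=\bigvee_j\phi_j$ (pairwise variable-disjoint disjuncts) $\Phi\odot D:=\sum_j\phi_j\odot D$. A query is pleasant if each atom contains at least one variable. Fix a relational signature $\Sigma$ (possibly with constants, not containing the symbols below) and $\Sigma^+=\Sigma\cup\{V,R,\mathsf{mars},\mathsf{venus}\}$ with $V,R$ fresh binary relations and $\mathsf{mars},\mathsf{venus}$ fresh constants. Let $\mathtt{Good}$ be the variable-free CQ consisting of $V(\mathsf{venus},\mathsf{venus})$, $R(\mathsf{venus},\mathsf{venus})$ and all atoms $A(t_1,\dots,t_k)$ with $A\in\Sigma$, each $t_i$ either $\mathsf{venus}$ or a constant of $\Sigma$, and $\mathsf{venus}$ occurring among the $t_i$ at least once. $\mathtt{Planet}(x):=R(\mathsf{venus},x)\wedge R(x,\mathsf{venus})$. $x\rhd\phi:=\phi\wedge\mathtt{Planet}(x)\wedge\bigwedge_{y\in var(\phi)}V(x,y)$. $\mathtt{RClique}_J(x_1,\dots,x_J):=\bigwedge_{j}\mathtt{Planet}(x_j)\wedge\bigwedge_{j<j'}(R(x_j,x_{j'})\wedge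 R(x_{j'},x_j))$. For a pleasant UCQ $\Phi=\bigvee_{j=1}^J\phi_j$ over $\Sigma$, $\mathtt{cq}(\Phi):=\mathtt{RClique}_J(x_1,\dots,x_J)\wedge\bigwedge_{j=1}^J(x_j\rhd\phi_j)$ with fresh variables $x_1,\dots,x_J$. The marsification $\text{Þ}(D)$ of a structure $D$ over $\Sigma$ is the structure over $\Sigma^+$ whose elements are those of $D$ together with two new distinct elements interpreting $\mathsf{mars}$ and $\mathsf{venus}$, and whose facts are: all atoms of $\mathtt{Good}\wedge\mathtt{Planet}(\mathsf{mars})$, all facts of $D$, and $V(\mathsf{mars},a)$ for every $a\in\mathcal V(D)$. *)

(* Defs.v *)
From mathcomp Require Import all_boot.

Set Implicit Arguments.
Unset Strict Implicit.
Unset Printing Implicit Defensive.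

Record signature := Signature {
  rsym : finType;
  sar  : rsym -> nat;
  csym : finType
}.

Record structure (S : signature) := Structure {
  dom : finType;
  cI  : csym S -> dom;
  rI  : forall A : rsym S, {set (sar A).-tuple dom}
}.

Definition term (S : signature) (X : Type) := (X + csym S)%type.

Definition atom (S : signature) (X : Type) :=
  {A : rsym S & (sar A).-tuple (term S X)}.

(* A CQ over S with variables drawn from X is the (finite) conjunction of
   its atoms, given as a list. *)
Definition CQ (S : signature) (X : Type) := seq (atom S X).

Section Counting.
Variables (S : signature) (X : finType).

Definition occurs (phi : CQ S X) (x : X) : bool :=
  has (fun a : atom S X => inl x \in (tagged a : seq (term S X))) phi.

Definition pleasant (phi : CQ S X) : bool :=
  all (fun a : atom S X =>
         has (fun t : term S X => if t is inl _ then true else false)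
             (tagged a : seq (term S X))) phi.

Variable D : structure S.

(* a partial map h : X -> V(D), defined exactly on var(phi), represents a
   map var(phi) -> V(D) *)
Definition termI (h : X -> option (dom D)) (t : term S X) : option (dom D) :=
  match t with inl x => h x | inr c => Some (cI D c) end.

Definition sent_to_fact (h : X -> option (dom D)) (a : atom S X) : bool :=
  [exists u : (sar (tag a)).-tuple (dom D),
     (map Some (u : seq _) == map (termI h) (tagged a : seq _))
     && (u \in rI D (tag a))].

(* phi (.) D : number of maps h : var(phi) -> V(D) sending every atom of
   phi to a fact of D. *)
Definition hcount (phi : CQ S X) : nat :=
  #|[set h : {ffun X -> option (dom D)} |
      [forall x, (h x != None) == occurs phi x] && all (sent_to_fact h) phi]|.
End Counting.

(* UCQ Phi = \/_{j < J} phi_j, disjuncts with pairwise disjoint variable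
   sets X j;  Phi (.) D = \sum_j phi_j (.) D. *)
Definition ucq_count (S : signature) (J : nat) (X : 'I_J -> finType)
    (Phi : forall j, CQ S (X j)) (D : structure S) : nat :=
  \sum_(j < J) hcount D (Phi j).

(* The extended signature Sigma^+ = Sigma + {V, R, mars, venus}         *)
(*   relation symbols : inl A (A in Sigma), inr true = V, inr false = R *)
(*   constants        : inl c (c in Sigma), inr true = mars,            *)
(*                      inr false = venus                              *)
Definition sarP (S : signature) (r : (rsym S + bool)%type) : nat :=
  match r with inl A => sar A | inr _ => 2 end.

Definition sigPlus (S : signature) : signature :=
  Signature (@sarP S) (csym S + bool)%type.

Section Plus.
Variable S : signature.

Definition relV : rsym (sigPlus S) := inr true.
Definition relR : rsym (sigPlus S) := inr false.
Definition cMars {Y : Type} : term (sigPlus S) Y := inr (inr true).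
Definition cVenus {Y : Type} : term (sigPlus S) Y := inr (inr false).

Definition binAtom {Y : Type} (b : bool) (s t : term (sigPlus S) Y)
  : atom (sigPlus S) Y :=
  @Tagged _ (inr b : rsym (sigPlus S))
    (fun r => (sar r).-tuple (term (sigPlus S) Y)) [tuple s; t].

Definition Vat {Y : Type} (s t : term (sigPlus S) Y) := binAtom true s t.
Definition Rat {Y : Type} (s t : term (sigPlus S) Y) := binAtom false s t.

Definition Planet {Y : Type} (x : Y) : CQ (sigPlus S) Y :=
  [:: Rat cVenus (inl x); Rat (inl x) cVenus].

Definition liftTerm {X Y : Type} (f : X -> Y) (t : term S X)
  : term (sigPlus S) Y :=
  match t with inl x => inl (f x) | inr c => inr (inl c) end.

Definition liftAtom {X Y : Type} (f : X -> Y) (a : atom S X)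
  : atom (sigPlus S) Y :=
  @Tagged _ (inl (tag a) : rsym (sigPlus S))
    (fun r => (sar r).-tuple (term (sigPlus S) Y))
    (map_tuple (liftTerm f) (tagged a)).

Definition liftCQ {X Y : Type} (f : X -> Y) (phi : CQ S X)
  : CQ (sigPlus S) Y := map (liftAtom f) phi.

Definition triangle {X : finType} {Y : Type} (f : X -> Y) (x : Y)
    (phi : CQ S X) : CQ (sigPlus S) Y :=
  liftCQ f phi ++ Planet x ++
  [seq Vat (inl x) (inl (f y)) | y <- enum (occurs phi)].

(* variables of cq(Phi): fresh x_1..x_J plus the disjoint union of the
   variables of the disjuncts *)
Definition cqVars (J : nat) (X : 'I_J -> finType) : finType :=
  ('I_J + {j : 'I_J & X j})%type.

Definition RClique (J : nat) (X : 'I_J -> finType) : CQ (sigPlus S) (cqVars X) :=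
  flatten [seq Planet (inl j : cqVars X) | j <- enum 'I_J] ++
  flatten [seq [:: Rat (inl (inl j : cqVars X)) (inl (inl j' : cqVars X));
                   Rat (inl (inl j' : cqVars X)) (inl (inl j : cqVars X))]
          | j <- enum 'I_J, j' <- filter (fun k : 'I_J => (j < k)%N) (enum 'I_J)].

Definition cqOf (J : nat) (X : 'I_J -> finType) (Phi : forall j, CQ S (X j))
  : CQ (sigPlus S) (cqVars X) :=
  RClique X ++
  flatten [seq triangle (fun y : X j => (inr (Tagged X y) : cqVars X))
                        (inl j : cqVars X) (Phi j) | j <- enum 'I_J].

(* Marsification.  Elements: inl a (a in D), inr true = mars,          *)
(* inr false = venus.                                                   *)
Variable D : structure S.

Definition mdom : finType := (dom D + bool)%type.
Definition eMars : mdom := inr true.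
Definition eVenus : mdom := inr false.

Definition mcI (c : csym (sigPlus S)) : mdom :=
  match c with inl k => inl (cI D k) | inr b => inr b end.

(* interpretations of the Good atoms A(t_1..t_k), A in Sigma: each t_i is
   venus (None) or a constant k of Sigma (Some k), venus occurring at
   least once *)
Definition goodFact (A : rsym S) (t : (sar A).-tuple mdom) : bool :=
  [exists u : (sar A).-tuple (option (csym S)),
     (None \in (u : seq _)) &&
     (t == map_tuple (fun o => if o is Some k then mcI (inl k) else eVenus) u)].

Definition marsRel (r : (rsym S + bool)%type) : {set (@sarP S r).-tuple mdom} :=
  match r return {set (@sarP S r).-tuple mdom} with
  | inl A => [set t | (t \in [set map_tuple inl u | u in rI D A]) || goodFact t]
  | inr true =>   (* V : V(venus,venus) from Good, V(mars,a) for a in V(D) *)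
      [set [tuple eVenus; eVenus]] :|: [set [tuple eMars; inl a] | a : dom D]
  | inr false =>  (* R : R(venus,venus) from Good, Planet(mars) *)
      [set [tuple eVenus; eVenus]; [tuple eVenus; eMars]; [tuple eMars; eVenus]]
  end.

Definition marsify : structure (sigPlus S) := @Structure (sigPlus S) mdom mcI marsRel.
End Plus.

(* Main.v *)
Require Import Defs.
From mathcomp Require Import all_boot.
Set Implicit Arguments.
Unset Strict Implicit.
Unset Printing Implicit Defensive.

Section Main.
Variables (S : signature) (J : nat) (X : 'I_J -> finType)
    (Phi : forall j : 'I_J, CQ S (X j)) (D : structure S).
Local Notation Y := (cqVars X).
Local Notation M := (marsify D).
Local Notation mdom := (mdom D).
Local Notation emb y := (inr (Tagged X y) : cqVars X).

Lemma sent_bin (Z : finType) (h : Z -> option mdom) b (s t : term (sigPlus S) Z) :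
  sent_to_fact (D:=M) h (binAtom b s t) =
  match termI (D:=M) h s, termI (D:=M) h t with
  | Some p, Some q => [tuple p; q] \in marsRel D (inr b)
  | _, _ => false end.
Proof.
rewrite /sent_to_fact /=; apply/existsP/idP.
  case=> u /andP[/eqP e H].
  case: (termI (D:=M) h s) e => [p|] e; case: (termI (D:=M) h t) e => [q|] e;
    try by case: u e H => [[|? [|? [|? ?]]] //].
  have -> : [tuple p; q] = u.
    apply: val_inj; apply: (@inj_map _ _ Some); first by move=> ? ? [].
    by rewrite e.
  exact: H.
case: (termI (D:=M) h s) => [p|] //; case: (termI (D:=M) h t) => [q|] // H.
by exists [tuple p; q]; rewrite H andbT.
Qed.

Lemma memR p q : ([tuple p; q] \in marsRel D (inr false)) =
  [|| (p == eVenus D) && (q == eVenus D), (p == eVenus D) && (q == eMars D)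
    | (p == eMars D) && (q == eVenus D)].
Proof. by rewrite /= !inE -!val_eqE /= !eqseq_cons /= !andbT orbA. Qed.

Lemma memV p q : ([tuple p; q] \in marsRel D (inr true)) =
  ((p == eVenus D) && (q == eVenus D)) ||
  ((p == eMars D) && (if q is inl _ then true else false)).
Proof.
rewrite /= !inE -!val_eqE /= !eqseq_cons /= !andbT; congr (_ || _).
apply/imsetP/idP.
  by case=> a _ /(congr1 val) [-> ->]; rewrite eqxx.
by case/andP=> /eqP->; case: q => // a _; exists a.
Qed.
Local Notation sent h a := (sent_to_fact (D:=M) h a).
Local Notation xv j := (inl (inl j : Y) : term (sigPlus S) Y).
Local Notation cV := (cVenus S (Y:=Y)).
Local Notation RR s t := (Rat (S:=S) (Y:=Y) s t).
Local Notation VV s t := (Vat (S:=S) (Y:=Y) s t).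

Lemma all_flatten T (P : pred T) (L : seq (seq T)) : all P (flatten L) = all (all P) L.
Proof. by elim: L => //= l L IH; rewrite all_cat IH. Qed.

Lemma allcq (h : Y -> option mdom) : all (fun a => sent h a) (cqOf Phi) <->
  [/\ (forall j, sent h (RR cV (xv j)) /\ sent h (RR (xv j) cV)),
      (forall j j' : 'I_J, (j < j')%N ->
          sent h (RR (xv j) (xv j')) /\ sent h (RR (xv j') (xv j))),
      (forall k, all (fun a => sent h (liftAtom (fun y : X k => emb y) a)) (Phi k)) &
      (forall k (y : X k), occurs (Phi k) y -> sent h (VV (xv k) (inl (emb y))))].
Proof.
rewrite /cqOf /RClique !all_cat !all_flatten !all_map.
have mE (j : 'I_J) : j \in Finite.enum 'I_J by rewrite -enumT mem_enum.
split.
  case/andP => /andP[/allP H1 /allP H2] /allP H3; split.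
  - by move=> j; move: (H1 j (mE j)) => /= /and3P[].
  - move=> j j' lt; move: (H2 j (mE j)) => /=; rewrite all_map => /allP H.
    by have := H j'; rewrite mem_filter lt mem_enum => /(_ isT) /= /and3P[-> ->].
  - move=> k; move: (H3 k (mE k)) => /=.
    by rewrite /triangle !all_cat /liftCQ all_map => /and3P[].
  - move=> k y oc; move: (H3 k (mE k)) => /=.
    rewrite /triangle !all_cat all_map => /and3P[_ _ /allP H].
    by have := H y; rewrite mem_enum => /(_ oc).
case=> H1 H2 H3 H4; apply/andP; split; [apply/andP; split|]; apply/allP => j _ /=.
- by case: (H1 j) => -> ->.
- rewrite all_map; apply/allP => j'; rewrite mem_filter => /andP[lt _] /=.
  by case: (H2 j j' lt) => -> ->.
- rewrite /triangle !all_cat /liftCQ !all_map H3 /=.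
  case: (H1 j) => -> -> /=; apply/allP => y; rewrite mem_enum => oc /=.
  by rewrite H4.
Qed.

Lemma has_flatten T (P : pred T) (L : seq (seq T)) : has P (flatten L) = has (has P) L.
Proof. by elim: L => //= l L IH; rewrite has_cat IH. Qed.

Lemma emb_tag k k' (y : X k) (y' : X k') : emb y = emb y' -> k = k'.
Proof.
by move=> e; have := congr1 (fun z : Y => if z is inr v then tag v else k) e.
Qed.

Lemma emb_inj k (y y' : X k) : emb y = emb y' -> y = y'.
Proof.
move=> e; have : Tagged X y = Tagged X y' by case: e.
exact: eq_from_Tagged.
Qed.

Lemma mem_lift_tag k k' (a : atom S (X k)) (y : X k') :
  inl (emb y) \in (tagged (liftAtom (fun y : X k => emb y) a) : seq _) -> k' = k.
Proof.
rewrite /= => /mapP[[y''|c] _ //= e].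
apply: (emb_tag (y:=y) (y':=y'')).
exact: (congr1 (fun t : term (sigPlus S) Y => if t is inl x then x else inl k) e).
Qed.

Lemma mem_lift k (a : atom S (X k)) (y : X k) :
  (inl (emb y) \in (tagged (liftAtom (fun y : X k => emb y) a) : seq _)) =
  (inl y \in (tagged a : seq _)).
Proof.
rewrite /=; have -> : (inl (emb y) : term (sigPlus S) Y) = liftTerm (fun y : X k => emb y) (inl y) by [].
apply: mem_map => -[t|c] [t'|c'] //= e.
- by rewrite (emb_inj (congr1 (fun t : term (sigPlus S) Y => if t is inl x then x else inl k) e)).
- by case: e => ->.
Qed.

Lemma memFE (T : finType) (x : T) : x \in Finite.enum T.
Proof. by rewrite -enumT mem_enum. Qed.

Lemma occ_inl j : occurs (cqOf Phi) (inl j : Y).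
Proof.
rewrite /occurs /cqOf /RClique !has_cat !has_flatten !has_map.
apply/orP; left; apply/orP; left; apply/hasP; exists j; first exact: memFE.
by rewrite /= !inE eqxx.
Qed.

Lemma occ_inr k (y : X k) : occurs (cqOf Phi) (emb y) = occurs (Phi k) y.
Proof.
rewrite /occurs /cqOf /RClique !has_cat !has_flatten !has_map.
apply/idP/idP.
  case/orP.
    case/orP => /hasP[j _] //=; rewrite has_map => /hasP[j' _] //=.
  case/hasP => k' _ /=; rewrite /triangle !has_cat => /or3P[].
  - rewrite /liftCQ has_map => H.
    case: (eqVneq k' k) => [e|ne].
      subst k'; apply: sub_has H => a /= Ha; by rewrite -mem_lift.
    exfalso; elim: (Phi k') H => //= a l IH /orP[Ha|//].
    by have := mem_lift_tag Ha => e; rewrite e eqxx in ne.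
  - by [].
  - rewrite has_map => /hasP[y' Hy'] /=; rewrite !inE /= => /eqP e.
    have e0 := congr1 (fun t : term (sigPlus S) Y => if t is inl x then x else inl k) e.
    have e' := emb_tag e0; subst k'.
    have e'' := emb_inj e0; subst y'.
    by rewrite mem_enum in Hy'.
move=> oc; apply/orP; right; apply/hasP; exists k; first exact: memFE.
rewrite /= /triangle !has_cat; apply/orP; right; apply/orP; right.
rewrite has_map; apply/hasP; exists y; first by rewrite mem_enum.
by rewrite /= !inE eqxx orbT.
Qed.

Lemma oinl_inj : injective (omap (@inl (dom D) bool)).
Proof. by move=> [x|] [y|] //= [->]. Qed.

Lemma sent_lift_mars k (h : Y -> option mdom) (hh : X k -> option (dom D))
    (a : atom S (X k)) :
  (forall y, h (emb y) = omap inl (hh y)) ->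
  sent h (liftAtom (fun y : X k => emb y) a) = sent_to_fact hh a.
Proof.
move=> Hh; rewrite /sent_to_fact /=.
have E : map (termI (D:=M) h) (map (liftTerm (fun y : X k => emb y)) (tagged a))
       = map (omap inl) (map (termI hh) (tagged a)).
  by rewrite -!map_comp; apply: eq_map => -[y|c] /=; [exact: Hh|].
apply/existsP/existsP.
  case=> u /andP[/eqP e Hu]; rewrite inE in Hu; case/orP: Hu.
    case/imsetP=> u' Hu' eu; exists u'; rewrite Hu' andbT; apply/eqP.
    apply: (inj_map oinl_inj); rewrite -E -e eu /= -!map_comp.
    by apply: eq_map.
  case/existsP=> w /andP[Hw /eqP eu]; exfalso.
  have : Some (eVenus D) \in map Some (u : seq _).
    rewrite eu /= -map_comp.
    by apply/mapP; exists None.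
  by rewrite e E => /mapP[o _]; case: o.
case=> u' /andP[/eqP e Hu']; exists (map_tuple inl u'); rewrite inE; apply/andP; split.
  by apply/eqP; rewrite E -e /= -!map_comp.
by apply/orP; left; apply/imsetP; exists u'.
Qed.

Lemma sent_lift_venus k (h : Y -> option mdom) (a : atom S (X k)) :
  (forall y, inl y \in (tagged a : seq _) -> h (emb y) = Some (eVenus D)) ->
  has (fun t : term S (X k) => if t is inl _ then true else false) (tagged a : seq _) ->
  sent h (liftAtom (fun y : X k => emb y) a).
Proof.
move=> Hv Hp; apply/existsP.
exists (map_tuple (fun t : term S (X k) => if t is inr c then inl (cI D c) else eVenus D) (tagged a)).
apply/andP; split.
  apply/eqP; rewrite /= -!map_comp; apply/eq_in_map => -[y|c] Hin //=.
  by rewrite Hv.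
rewrite inE; apply/orP; right; apply/existsP.
exists (map_tuple (fun t : term S (X k) => if t is inr c then Some c else None) (tagged a)).
apply/andP; split.
  case/hasP: Hp => -[y|c] Hin // _; apply/mapP; by exists (inl y).
by apply/eqP; apply: val_inj; rewrite /= -map_comp; apply: eq_map => -[y|c].
Qed.

Lemma all_venus k (h : Y -> option mdom) : pleasant (Phi k) ->
  (forall y, occurs (Phi k) y -> h (emb y) = Some (eVenus D)) ->
  all (fun a => sent h (liftAtom (fun y : X k => emb y) a)) (Phi k).
Proof.
rewrite /pleasant /occurs; elim: (Phi k) => //= a l IH /andP[Pa Pl] Hy.
apply/andP; split.
  by apply: sent_lift_venus => // y Hy'; apply: Hy; rewrite Hy'.
by apply: IH => // y Hy'; apply: Hy; rewrite Hy' orbT.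
Qed.

Definition okM (h : {ffun Y -> option mdom}) :=
  [forall x, (h x != None) == occurs (cqOf Phi) x] && all (sent_to_fact (D:=M) h) (cqOf Phi).

Definition okD k (hh : {ffun X k -> option (dom D)}) :=
  [forall y, (hh y != None) == occurs (Phi k) y] && all (sent_to_fact hh) (Phi k).

Definition venusOf k (y : X k) : option mdom :=
  if occurs (Phi k) y then Some (eVenus D) else None.

Definition unmars k (h : {ffun Y -> option mdom}) : {ffun X k -> option (dom D)} :=
  [ffun y => if h (emb y) is Some (inl a) then Some a else None].

Definition h0 : {ffun Y -> option mdom} :=
  [ffun x => match x with inl _ => Some (eVenus D) | inr v => venusOf (tagged v) end].

Definition pk j (v : {i : 'I_J & X i}) : option (X j) := [pick y : X j | Tagged X y == v].

Definition g j (hh : {ffun X j -> option (dom D)}) : {ffun Y -> option mdom} :=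
  [ffun x => match x with
   | inl k => Some (if k == j then eMars D else eVenus D)
   | inr v => if pk j v is Some y then omap inl (hh y)
              else venusOf (tagged v) end].

Definition cls (h : {ffun Y -> option mdom}) := [pick j | h (inl j) == Some (eMars D)].

Lemma occM (h : Y -> option mdom) :
  [forall x, (h x != None) == occurs (cqOf Phi) x] <->
  (forall j, h (inl j) != None) /\
  (forall k (y : X k), (h (emb y) != None) = occurs (Phi k) y).
Proof.
split.
  move/forallP => H; split.
    by move=> j; have := H (inl j); rewrite occ_inl => /eqP.
  by move=> k y; have := H (emb y); rewrite occ_inr => /eqP.
case=> H1 H2; apply/forallP => -[j|[k y]].
  by rewrite occ_inl H1.
by have := occ_inr y; rewrite /= => ->; rewrite H2.
Qed.

Lemma okM_planet h j : okM h -> h (inl j) = Some (eVenus D) \/ h (inl j) = Some (eMars D).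
Proof.
rewrite /okM; case/andP=> _ /(allcq h)[H1 _ _ _]; case: (H1 j) => + _.
rewrite sent_bin /=; case: (h (inl j)) => [q|] //; rewrite memR eqxx /=.
by case/or3P => // /eqP ->; auto.
Qed.

Lemma okM_RR h j j' : okM h -> j != j' -> h (inl j) = Some (eMars D) ->
  h (inl j') = Some (eMars D) -> False.
Proof.
rewrite /okM; case/andP=> _ /(allcq h)[_ H2 _ _] ne e e'.
case: (ltngtP j j') => [lt|lt|eq].
- by case: (H2 j j' lt) => + _; rewrite sent_bin /= e e' memR.
- by case: (H2 j' j lt) => + _; rewrite sent_bin /= e e' memR.
- by move/eqP: ne; apply; apply: val_inj.
Qed.

Lemma okM_venus h k (y : X k) : okM h -> h (inl k) = Some (eVenus D) ->
  h (emb y) = venusOf y.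
Proof.
move=> ok e; have := ok; rewrite /okM; case/andP=> /(occM h)[_ Ho] /(allcq h)[_ _ _ H4].
rewrite /venusOf; case oc: (occurs (Phi k) y).
  have := H4 k y oc; rewrite sent_bin /= e.
  by case: (h (emb y)) => [q|] //; rewrite memV eqxx /= orbF => /eqP ->.
by have := Ho k y; rewrite oc; case: (h (emb y)).
Qed.

Lemma okM_mars h k (y : X k) : okM h -> h (inl k) = Some (eMars D) ->
  h (emb y) = omap inl (unmars k h y).
Proof.
move=> ok e; have := ok; rewrite /okM; case/andP=> /(occM h)[_ Ho] /(allcq h)[_ _ _ H4].
rewrite ffunE; case oc: (occurs (Phi k) y).
  have := H4 k y oc; rewrite sent_bin /= e.
  by case: (h (emb y)) => [[a|b]|] //; rewrite memV.
by have := Ho k y; rewrite oc; case: (h (emb y)).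
Qed.

Lemma pk_same j (y : X j) : pk j (Tagged X y) = Some y.
Proof.
rewrite /pk; case: pickP => [y' | H].
  by move/eqP => e; rewrite (eq_from_Tagged e).
by have := H y; rewrite eqxx.
Qed.

Lemma pk_diff j k (y : X k) : k != j -> pk j (Tagged X y) = None.
Proof.
move=> ne; rewrite /pk; case: pickP => // y' /eqP /(congr1 tag) /= e.
by rewrite e eqxx in ne.
Qed.

Lemma g_same j (hh : {ffun X j -> option (dom D)}) (y : X j) : g hh (emb y) = omap inl (hh y).
Proof. by rewrite ffunE /= pk_same. Qed.

Lemma g_diff j (hh : {ffun X j -> option (dom D)}) k (y : X k) : k != j -> g hh (emb y) = venusOf y.
Proof. by move=> ne; rewrite ffunE /= pk_diff. Qed.

Lemma g_inl j (hh : {ffun X j -> option (dom D)}) k :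
  g hh (inl k) = Some (if k == j then eMars D else eVenus D).
Proof. by rewrite ffunE. Qed.

Lemma g_inj j : injective (@g j).
Proof.
move=> h1 h2 e; apply/ffunP => y; apply: oinl_inj; by rewrite -!g_same e.
Qed.

Lemma cls_g j (hh : {ffun X j -> option (dom D)}) : cls (g hh) = Some j.
Proof.
rewrite /cls; case: pickP => [k|H].
  by rewrite g_inl; case: (eqVneq k j) => [->//|_].
by have := H j; rewrite g_inl eqxx eqxx.
Qed.

Lemma ok_g j (hh : {ffun X j -> option (dom D)}) :
  (forall k, pleasant (Phi k)) -> okD hh -> okM (g hh).
Proof.
move=> Hpl /andP[/forallP Ho Ha]; apply/andP; split.
  apply/(occM (g hh)); split => [k|k y]; first by rewrite g_inl.
  case: (eqVneq k j) => [e|ne].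
    subst k; rewrite g_same -(eqP (Ho y)); by case: (hh y) => [a|] /=.
  by rewrite g_diff // /venusOf; case: occurs.
apply/(allcq (g hh)); split.
- by move=> k; rewrite !sent_bin /= !g_inl; case: (k == j); rewrite !memR /eVenus /eMars /=.
- move=> k k' lt; rewrite !sent_bin /= !g_inl.
  case: (eqVneq k j) => [e|ne]; case: (eqVneq k' j) => [e'|ne']; rewrite ?memR /eVenus /eMars //=.
  by subst; rewrite ltnn in lt.
- move=> k; case: (eqVneq k j) => [e|ne].
    subst k; rewrite (@eq_all _ _ (sent_to_fact hh)) // => a.
    exact: (sent_lift_mars a (g_same hh)).
  by apply: all_venus => // y oc; rewrite g_diff // /venusOf oc.
- move=> k y oc; rewrite sent_bin /= g_inl; case: (eqVneq k j) => [e|ne].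
    subst k; rewrite g_same; have : hh y != None by rewrite (eqP (Ho y)).
    by case: (hh y) => //= a _; rewrite memV /eVenus /eMars.
  by rewrite g_diff // /venusOf oc memV /eVenus /eMars.
Qed.

Lemma okM_g_inv j h : okM h -> cls h = Some j ->
  okD (unmars j h) /\ h = g (unmars j h).
Proof.
move=> ok; rewrite /cls; case: pickP => // j' /eqP ej [ejj]; subst j'.
have hk : forall k, k != j -> h (inl k) = Some (eVenus D).
  move=> k ne; case: (okM_planet k ok) => // e; exfalso; exact: okM_RR ok ne e ej.
split.
  apply/andP; split.
    apply/forallP => y; have := okM_mars y ok ej.
    have := ok; rewrite /okM => /andP[/(occM h)[_ Ho] _]; rewrite -Ho => ->.
    by case: (unmars j h y).
  have := ok; rewrite /okM => /andP[_ /(allcq h)[_ _ H3 _]]; move: (H3 j).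
  by rewrite (@eq_all _ _ (sent_to_fact (unmars j h))) // => a; apply: sent_lift_mars => y; apply: okM_mars.
apply/ffunP => -[k|[k y]].
  by rewrite g_inl; case: eqP => [->//|/eqP ne]; exact: hk.
case: (eqVneq k j) => [e|ne].
  by subst k; rewrite g_same; apply: okM_mars.
by rewrite g_diff //; apply: okM_venus => //; apply: hk.
Qed.

Lemma ok_h0 : (forall k, pleasant (Phi k)) -> okM h0.
Proof.
move=> Hpl; apply/andP; split.
  apply/(occM h0); split => [j|k y]; rewrite !ffunE //= /venusOf; by case: occurs.
apply/(allcq h0); split.
- by move=> k; rewrite !sent_bin /= !ffunE memR /eVenus /eMars.
- by move=> k k' lt; rewrite !sent_bin /= !ffunE memR /eVenus /eMars.
- by move=> k; apply: all_venus => // y oc; rewrite ffunE /= /venusOf oc.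
- by move=> k y oc; rewrite sent_bin /= !ffunE /= /venusOf oc memV /eVenus /eMars.
Qed.

Lemma cls_h0 : cls h0 = None.
Proof. by rewrite /cls; case: pickP => // j; rewrite ffunE. Qed.

Lemma okM_h0_inv h : okM h -> cls h = None -> h = h0.
Proof.
move=> ok; rewrite /cls; case: pickP => // H _.
have hk : forall k, h (inl k) = Some (eVenus D).
  move=> k; case: (okM_planet k ok) => // e; by have := H k; rewrite e eqxx.
apply/ffunP => -[k|[k y]]; rewrite ffunE /=; first exact: hk.
exact: okM_venus.
Qed.

Lemma sum_opt (F : option 'I_J -> nat) :
  \sum_(o : option 'I_J) F o = F None + \sum_(j < J) F (Some j).
Proof.
rewrite (bigD1 None) //=; congr (_ + _).
rewrite (reindex_omap Some id) => [|[i|] //].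
by apply: eq_bigl => i /=; rewrite eqxx.
Qed.

Lemma count_main : (forall k, pleasant (Phi k)) ->
  #|[set h | okM h]| = 1 + \sum_(j < J) #|[set hh | okD (k:=j) hh]|.
Proof.
move=> Hpl.
rewrite -sum1_card (partition_big cls xpredT) //= sum_opt.
congr (_ + _).
  apply: (@eq_trans _ _ (\sum_(i in [set h0]) 1)); last by rewrite sum1_card cards1.
  apply: eq_bigl => h; rewrite !inE.
  apply/andP/eqP => [[ok /eqP c]|->]; first exact: okM_h0_inv.
  by rewrite ok_h0 // cls_h0.
apply: eq_bigr => j _.
rewrite -(card_imset _ (@g_inj j)) -sum1_card.
apply: eq_bigl => h; rewrite !inE.
apply/andP/imsetP => [[ok /eqP c]|[hh Hh ->]].
  have [od e] := okM_g_inv ok c; exists (unmars j h) => //; by rewrite inE.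
by rewrite ok_g // ?cls_g //; rewrite inE in Hh.
Qed.
End Main.

Theorem mainTheorem10 (S : signature) (J : nat) (X : 'I_J -> finType)
    (Phi : forall j : 'I_J, CQ S (X j)) (D : structure S) :
  (forall j : 'I_J, pleasant (Phi j)) ->
  hcount (marsify D) (cqOf Phi) = 1 + ucq_count Phi D.
Proof.
move=> Hpl; exact: (count_main D Hpl).
Qed.
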